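(* Let $W\in\mathbb{S}^n_+$, $K\in\mathbb{R}^{m\times n}$, $R_1\in\mathbb{S}^{n_1}_+,\dots,R_q\in\mathbb{S}^{n_q}_+$, $S\in\mathbb{D}^m_+$, $\sigma_1,\dots,\sigma_q>0$, and $Z,J\in\mathbb{R}^{m\times n}$. Let $R(\tau):=\bigoplus_{j=1}^q e^{\sigma_j\tau_j}R_j$ for $\tau\in\mathbb{R}^q$, $\Sigma:=\bigoplus_{j=1}^q\sigma_j\mathbf{I}_{n_j}$, and $\widehat R:=\bigoplus_{i=1}^q R_i$. Then $$\begin{bmatrix}\operatorname{He}((A+BK)W) & -BK & BS-WK^{\mathsf T}-Z^{\mathsf T}\\ \star & \operatorname{He}(R(\tau)A)-\Sigma R(\tau) & K^{\mathsf T}-J^{\mathsf T}\\ \star&\star&-2S\end{bmatrix}\prec 0\quad\text{for all }\tau\in\mathcal{T}$$ holds if and only if, for all $\Psi\in\mathcal{Z}:=\left\{\bigoplus_{i=1}^q\psi_i\mathbf{I}_{n_i}:\ \psi_i\in\{1,e^{\sigma_iT_2^{(i)}}\}\right\}$, $$\mathfrak{N}(\Psi):=\begin{bmatrix}\operatorname{He}((A+BK)W) & -BK & BS-WK^{\mathsf T}-Z^{\mathsf T}\\ \star & \operatorname{He}(\widehat R\Psi A)-\Sigma\widehat R\Psi & K^{\mathsf T}-J^{\mathsf T}\\ \star&\star&-2S\end{bmatrix}\prec 0.$$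
   Context: Fix integers $n,m\ge1$, $1\le q\le n$, $n_1,\dots,n_q\ge1$ with $n_1+\dots+n_q=n$; $A\in\mathbb{R}^{n\times n}$, $B\in\mathbb{R}^{n\times m}$; positive reals $T_2^{(1)},\dots,T_2^{(q)}$, and $\mathcal{T}=[0,T_2^{(1)}]\times\dots\times[0,T_2^{(q)}]$. Notation: $\mathbb{S}^k_+$ symmetric positive definite $k\times k$ matrices; $\mathbb{D}^m_+$ diagonal positive definite $m\times m$ matrices; $\operatorname{He}(M)=M+M^{\mathsf T}$; $\bigoplus$ block-diagonal direct sum; $\star$ symmetric blocks. *)

(* Defs.v *)
From HB Require Import structures.
From mathcomp Require Import all_boot all_order all_algebra.
From mathcomp Require Import all_classical all_reals all_analysis.
Set Implicit Arguments. Unset Strict Implicit. Unset Printing Implicit Defensive.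
Import Order.TTheory GRing.Theory Num.Theory.
Local Open Scope ring_scope.

Definition He (R : ringType) (k : nat) (M : 'M[R]_k) : 'M[R]_k := M + M^T.

Definition posdef (R : numDomainType) (k : nat) (M : 'M[R]_k) : Prop :=
  M^T = M /\ forall x : 'cV[R]_k, x != 0 -> 0 < (x^T *m M *m x) 0 0.

Definition negdef (R : numDomainType) (k : nat) (M : 'M[R]_k) : Prop :=
  posdef (- M).

Definition posdiag (R : numDomainType) (k : nat) (M : 'M[R]_k) : Prop :=
  is_diag_mx M /\ forall i, 0 < M i i.

(* symmetric 3x3 block matrix [A11 A12 A13; * A22 A23; * * A33] *)
Definition sym3 (R : ringType) (a b c : nat)
  (A11 : 'M[R]_a) (A12 : 'M[R]_(a, b)) (A13 : 'M[R]_(a, c))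
  (A22 : 'M[R]_b) (A23 : 'M[R]_(b, c)) (A33 : 'M[R]_c) : 'M[R]_(a + (b + c)) :=
  block_mx A11 (row_mx A12 A13) (col_mx A12^T A13^T) (block_mx A22 A23 A23^T A33).

(* Main.v *)
Require Import Defs.
From HB Require Import structures.
From mathcomp Require Import all_boot all_order all_algebra.
From mathcomp Require Import all_classical all_reals all_analysis.
From mathcomp Require Import ring lra.
Import Order.TTheory GRing.Theory Num.Theory.
Local Open Scope ring_scope.
Lemma mxdiag_mul (R : pzSemiRingType) p (p_ : 'I_p -> nat) (D E : forall i, 'M[R]_(p_ i)) :
  \mxdiag_i D i *m \mxdiag_i E i = \mxdiag_i (D i *m E i).
Proof.
rewrite {2}/mxdiag mul_mxdiag_mxblock /mxdiag; apply/eq_mxblock => i j.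
case: eqP => [e|_]; last by rewrite mulmx0.
subst j; by rewrite !conform_mx_id.
Qed.

Lemma mxdiag_scale (R : comPzRingType) p (p_ : 'I_p -> nat) a (D : forall i, 'M[R]_(p_ i)) :
  a *: \mxdiag_i D i = \mxdiag_i (a *: D i).
Proof.
rewrite -mul_scalar_mx -mxdiagZ mxdiag_mul; apply: eq_mxdiag => i.
by rewrite mul_scalar_mx.
Qed.

Definition upd {T : Type} {q : nat} (c : 'I_q -> T) (j : 'I_q) (v : T) : 'I_q -> T :=
  fun i => if i == j then v else c i.

Lemma box_ind (R : realDomainType) q (lo hi : 'I_q -> R) (P : ('I_q -> R) -> Prop) :
  (forall j, lo j <= hi j) ->
  (forall c j, lo j <= c j <= hi j -> P (upd c j (lo j)) -> P (upd c j (hi j)) -> P c) ->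
  (forall c, (forall j, c j = lo j \/ c j = hi j) -> P c) ->
  forall c, (forall j, lo j <= c j <= hi j) -> P c.
Proof.
move=> hlh Hstep Hv.
suff H: forall k c, (forall j, lo j <= c j <= hi j) ->
   (forall j : 'I_q, (k <= j)%N -> c j = lo j \/ c j = hi j) -> P c.
  move=> c hc; apply: (H q c hc) => j; by rewrite leqNgt ltn_ord.
elim=> [|k IH] c hc hv.
  by apply: Hv => j; apply: hv.
case: (ltnP k q) => hk.
  pose j0 := Ordinal hk.
  have hv' : forall v, lo j0 <= v <= hi j0 -> (v = lo j0 \/ v = hi j0) -> P (upd c j0 v).
    move=> v hv0 hvv; apply: IH.
      by move=> j; rewrite /upd; case: eqP => [->|_] //.
    move=> j hj; rewrite /upd; case: eqP => [->|ne] //.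
    apply: hv; rewrite ltn_neqAle hj andbT; apply/eqP => e; apply: ne.
    by apply: val_inj.
  apply: (Hstep c j0 (hc j0)); apply: hv'.
  - by rewrite lexx hlh.
  - by left.
  - by rewrite lexx hlh.
  - by right.
apply: IH => // j hj; exfalso; move: (ltn_ord j); rewrite ltnNge.
by rewrite (leq_trans hk hj).
Qed.

Lemma posdef_comb (R : realFieldType) k (M1 M2 : 'M[R]_k) a b :
  0 <= a -> 0 <= b -> a + b = 1 ->
  M1^T = M1 -> M2^T = M2 ->
  (forall x : 'cV[R]_k, x != 0 -> 0 < (x^T *m M1 *m x) 0 0) ->
  (forall x : 'cV[R]_k, x != 0 -> 0 < (x^T *m M2 *m x) 0 0) ->
  (a *: M1 + b *: M2)^T = a *: M1 + b *: M2 /\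
  (forall x : 'cV[R]_k, x != 0 -> 0 < (x^T *m (a *: M1 + b *: M2) *m x) 0 0).
Proof.
move=> ha hb hab t1 t2 p1 p2; split.
  by rewrite linearD !linearZ /= t1 t2.
move=> x hx; rewrite mulmxDr mulmxDl -!scalemxAr -!scalemxAl.
have := p1 x hx; have := p2 x hx.
set U := (x^T *m M1 *m x); set V := (x^T *m M2 *m x) => hv hu.
have -> : (a *: U + b *: V) 0 0 = a * U 0 0 + b * V 0 0 by rewrite !mxE.
move: (U 0 0) (V 0 0) hu hv => u v hu hv.
case: (ltrP 0 a) => ha'.
  have h1 : 0 < a * u by rewrite mulr_gt0.
  have h2 : 0 <= b * v by rewrite mulr_ge0 // ltW.
  by apply: (lt_le_trans h1); rewrite lerDl.
have a0 : a = 0 by apply/eqP; rewrite eq_le ha' ha.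
by move: hab; rewrite a0 add0r => ->; rewrite mul0r add0r mul1r.
Qed.

Lemma sym3_comb (R : comNzRingType) (n1 n2 n3 : nat) (a b : R) (A11 : 'M[R]_n1)
  (A12 : 'M[R]_(n1, n2)) (A13 : 'M[R]_(n1, n3))
  (X1 X2 : 'M[R]_n2) (A23 : 'M[R]_(n2, n3)) (A33 : 'M[R]_n3) : a + b = 1 ->
  sym3 A11 A12 A13 (a *: X1 + b *: X2) A23 A33 =
  a *: sym3 A11 A12 A13 X1 A23 A33 + b *: sym3 A11 A12 A13 X2 A23 A33.
Proof.
move=> hab; rewrite /sym3 !scale_block_mx !scale_row_mx !scale_col_mx ?scale_block_mx.
by rewrite !add_block_mx !add_row_mx !add_col_mx ?add_block_mx -!scalerDl hab !scale1r.
Qed.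

Lemma negdef_comb (R : realFieldType) k (M1 M2 : 'M[R]_k) a b :
  0 <= a -> 0 <= b -> a + b = 1 -> negdef M1 -> negdef M2 -> negdef (a *: M1 + b *: M2).
Proof.
move=> ha hb hab [t1 p1] [t2 p2]; rewrite /negdef opprD -!scalerN.
exact: posdef_comb.
Qed.

Lemma X_comb (R : comNzRingType) k (A Sig D1 D2 : 'M[R]_k) a b :
  He ((a *: D1 + b *: D2) *m A) - Sig *m (a *: D1 + b *: D2) =
  a *: (He (D1 *m A) - Sig *m D1) + b *: (He (D2 *m A) - Sig *m D2).
Proof.
rewrite /He mulmxDl mulmxDr -!scalemxAl -!scalemxAr !linearD !linearZ /=.
apply/matrixP => i j; rewrite !mxE.
set x1 := (D1 *m A) i j. set x2 := (D2 *m A) i j.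
set y1 := (D1 *m A) j i. set y2 := (D2 *m A) j i.
set z1 := (Sig *m D1) i j. set z2 := (Sig *m D2) i j.
ring.
Qed.

Theorem proposition1 (R : realType) (q m : nat) (nn : 'I_q -> nat)
  (A : 'M[R]_(\sum_(j < q) nn j)) (B : 'M[R]_(\sum_(j < q) nn j, m))
  (T2 : 'I_q -> R) (sigma : 'I_q -> R)
  (W : 'M[R]_(\sum_(j < q) nn j)) (K : 'M[R]_(m, \sum_(j < q) nn j))
  (Rb : forall j : 'I_q, 'M[R]_(nn j)) (S : 'M[R]_m)
  (Z J : 'M[R]_(m, \sum_(j < q) nn j)) :
  (0 < q)%N -> (0 < m)%N -> (forall j, (0 < nn j)%N) ->
  (forall j, 0 < T2 j) ->
  posdef W -> (forall j, posdef (Rb j)) -> posdiag S ->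
  (forall j, 0 < sigma j) ->
  let Sig := \mxdiag_(j < q) ((sigma j)%:M : 'M[R]_(nn j)) in
  let Rtau (tau : 'I_q -> R) := \mxdiag_(j < q) (expR (sigma j * tau j) *: Rb j) in
  let Rhat := \mxdiag_(j < q) Rb j in
  (forall tau : 'I_q -> R, (forall j, 0 <= tau j <= T2 j) ->
     negdef (sym3 (He ((A + B *m K) *m W)) (- (B *m K))
                  (B *m S - W *m K^T - Z^T)
                  (He (Rtau tau *m A) - Sig *m Rtau tau) (K^T - J^T)
                  (- (2%:R *: S))))
  <->
  (forall psi : 'I_q -> R,
     (forall j, psi j = 1 \/ psi j = expR (sigma j * T2 j)) ->
     let Psi := \mxdiag_(j < q) ((psi j)%:M : 'M[R]_(nn j)) in
     negdef (sym3 (He ((A + B *m K) *m W)) (- (B *m K))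
                  (B *m S - W *m K^T - Z^T)
                  (He (Rhat *m Psi *m A) - Sig *m Rhat *m Psi) (K^T - J^T)
                  (- (2%:R *: S)))).
Proof.
move=> hq hm hn hT hW hRb hS hsig Sig Rtau Rhat.
pose NN (D : 'M[R]_(\sum_(j < q) nn j)) := sym3 (He ((A + B *m K) *m W)) (- (B *m K))
                  (B *m S - W *m K^T - Z^T)
                  (He (D *m A) - Sig *m D) (K^T - J^T) (- (2%:R *: S)).
pose Dm (c : 'I_q -> R) := \mxdiag_(j < q) (c j *: Rb j).
have ePsi : forall psi : 'I_q -> R,
    Rhat *m \mxdiag_(j < q) ((psi j)%:M : 'M[R]_(nn j)) = Dm psi.
  move=> psi; rewrite /Rhat mxdiag_mul; apply: eq_mxdiag => j.
  by rewrite mul_mx_scalar.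
split.
- move=> H psi hpsi Psi; rewrite -[Sig *m Rhat *m Psi]mulmxA /Psi ePsi.
  pose tau j := if psi j == 1 then 0 else T2 j.
  have E : Dm psi = Rtau tau.
    apply: eq_mxdiag => j; congr (_ *: _); rewrite /tau.
    case: eqP => [->|ne]; first by rewrite mulr0 expR0.
    by case: (hpsi j).
  rewrite E; apply: (H tau) => j; rewrite /tau; case: eqP => _.
    by rewrite lexx (ltW (hT j)).
  by rewrite lexx (ltW (hT j)).
- move=> H tau htau.
  pose lo (j : 'I_q) := (1 : R).
  pose hi (j : 'I_q) := expR (sigma j * T2 j).
  have hlohi : forall j, lo j < hi j.
    by move=> j; rewrite /lo /hi expR_gt1 mulr_gt0.
  change (negdef (NN (Dm (fun j => expR (sigma j * tau j))))).
  apply: (@box_ind R q lo hi (fun c => negdef (NN (Dm c)))).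
  + by move=> j; apply: ltW.
  + move=> c j hc h1 h2.
    pose t := (c j - lo j) / (hi j - lo j).
    have hd : hi j - lo j != 0 by rewrite subr_eq0 gt_eqF.
    have -> : Dm c = (1 - t) *: Dm (upd c j (lo j)) + t *: Dm (upd c j (hi j)).
      rewrite !mxdiag_scale -mxdiagD; apply: eq_mxdiag => i.
      rewrite !scalerA -scalerDl; congr (_ *: _); rewrite /upd.
      case: eqP => [->|_].
        rewrite /t; move: (c j) (lo j) (hi j) hd => x l h hd'.
        by field.
      by rewrite -mulrDl subrK mul1r.
    have NNc : forall (a b : R) D1 D2, a + b = 1 -> NN (a *: D1 + b *: D2) = a *: NN D1 + b *: NN D2.
      by move=> a b D1 D2 hab; rewrite /NN X_comb sym3_comb.
    rewrite NNc; last by rewrite subrK.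
    apply: (@negdef_comb _ _ _ _ _ _ _ _ _ h1 h2).
    * rewrite subr_ge0 /t ler_pdivrMr ?subr_gt0 // mul1r lerD2r; by case/andP: hc.
    * rewrite /t divr_ge0 // subr_ge0; [by case/andP: hc | exact: ltW].
    * by rewrite subrK.
  + move=> c hc.
    have hv : forall j, c j = 1 \/ c j = expR (sigma j * T2 j).
      by move=> j; case: (hc j) => ->; [left|right].
    have /= HH := H c hv.
    by rewrite -[Sig *m Rhat *m _]mulmxA ePsi in HH.
  + move=> j; rewrite /lo /hi -expR0 !ler_expR.
    have := htau j => /andP [h0 h1].
    by rewrite (mulr_ge0 (ltW (hsig j)) h0) /= ler_pM2l.
Qed.
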